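(* Let $M$ be a magma satisfying $(xy)z = xx$, $x(yz) = xx$ and $xy = yx$ for all $x,y,z\in M$. Then $M$ satisfies $xy = zu$ for all $x,y,z,u\in M$ if and only if $M$ avoids the magma $Q$ on $\{0,1,2,3\}$ with Cayley table \[ \begin{array}{c|cccc} Q & 0 & 1 & 2 & 3 \\ \hline 0 & 0 & 0 & 0 & 0 \\ 1 & 0 & 0 & 3 & 0 \\ 2 & 0 & 3 & 0 & 0 \\ 3 & 0 & 0 & 0 & 0 \end{array}. \]
   Context: A magma is a nonempty set with a binary operation, written by juxtaposition. A magma $M$ avoids a magma $F$ if no submagma of $M$ is isomorphic to $F$. *)

(* Defs.v *)
From mathcomp Require Import all_boot.
Set Implicit Arguments. Unset Strict Implicit. Unset Printing Implicit Defensive.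

Definition Qop (a b : 'I_4) : 'I_4 :=
  inord (if ((val a == 1) && (val b == 2)) || ((val a == 2) && (val b == 1))
         then 3 else 0).

Definition is_submagma (M : Type) (op : M -> M -> M) (S : M -> Prop) : Prop :=
  (exists x, S x) /\ (forall x y, S x -> S y -> S (op x y)).

Definition submagma_iso_Q (M : Type) (op : M -> M -> M) (S : M -> Prop) : Prop :=
  exists f : 'I_4 -> M,
    [/\ (forall a, S (f a)),
        injective f,
        (forall x, S x -> exists a, f a = x) &
        (forall a b, f (Qop a b) = op (f a) (f b))].

Definition avoids_Q (M : Type) (op : M -> M -> M) : Prop :=
  ~ exists S : M -> Prop, is_submagma op S /\ submagma_iso_Q op S.

(* Main.v *)
Require Import Defs.
From mathcomp Require Import all_boot.
From Stdlib Require Classical_Prop.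

Theorem mainTheorem4 (M : Type) (op : M -> M -> M) (ne : inhabited M)
  (h1 : forall x y z, op (op x y) z = op x x)
  (h2 : forall x y z, op x (op y z) = op x x)
  (h3 : forall x y, op x y = op y x) :
  (forall x y z u, op x y = op z u) <-> avoids_Q op.
Proof.
split.
- move=> Hc [S [_ [f [_ finj _ fh]]]].
  have e0 : f (Qop ord0 ord0) = f ord0 :> M.
    by congr f; apply: val_inj; rewrite /Qop /= inordK.
  have e3 : f (Qop (inord 1) (inord 2)) = f (inord 3) :> M.
    by congr f; apply: val_inj; rewrite /Qop /= !inordK.
  rewrite !fh in e0 e3.
  have := finj ord0 (inord 3).
  have -> : f ord0 = f (inord 3).
    by rewrite -e0 -e3; apply: Hc.
  by move=> /(_ erefl) /(congr1 val); rewrite /= inordK.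
- move=> HQ.
  have sq : forall x y, op x x = op y y.
    by move=> x y; rewrite -(h2 x y y) h3 h1.
  case: ne => m0; set e := op m0 m0.
  have eE : forall x, op x x = e by move=> x; apply: sq.
  have key : forall x y, op x y = e.
    move=> a b; apply: Classical_Prop.NNPP => Hab.
    have ae : a <> e by move=> H; apply: Hab; rewrite H /e h1.
    have be : b <> e by move=> H; apply: Hab; rewrite H h3 /e h1.
    have abne : a <> b by move=> H; apply: Hab; rewrite H eE.
    have aab : a <> op a b by move=> H; apply: Hab; rewrite {1}H h1 eE.
    have bab : b <> op a b by move=> H; apply: Hab; rewrite {1}H h2 eE.
    pose f (i : 'I_4) : M := match val i with 0 => e | 1 => a | 2 => b | _ => op a b end.
    apply: HQ; exists (fun x => exists i, f i = x).
    have fh : forall i j, f (Qop i j) = op (f i) (f j).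
      move=> [[|[|[|[|n]]]] Hi] [[|[|[|[|k]]]] Hk] //;
      rewrite /f /Qop /= inordK //= ?eE /e ?h1 ?h2 //;
      try (rewrite h3 h1; done); try (rewrite h3 h2; done);
      try (rewrite h3; done).
    split; first split.
    + by exists (f ord0), ord0.
    + by move=> x y [i <-] [j <-]; exists (Qop i j); apply: fh.
    exists f; split => //.
    + by move=> i; exists i.
    + move=> [[|[|[|[|n]]]] Hi] [[|[|[|[|k]]]] Hk] //; rewrite /f /=;
      try (move=> H; apply: val_inj => /=; done);
      move=> H; exfalso; by [apply: ae| apply: be|apply: abne|apply: aab|apply: bab|apply: Hab].
  by move=> x y z u; rewrite !key.
Qed.
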